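(* A restriction semigroup is isomorphic (as a $(2,1,1)$-algebra) to a $W$-product $W(T,Y)$ of a semilattice $Y$ by a monoid $T$ if and only if it is proper and its underlying left partial action is an action (i.e. defined everywhere). In particular, a restriction semigroup is isomorphic to a semidirect product $T\ltimes Y$ of a semilattice by a monoid if and only if it is proper and its underlying left partial action is an action by order-automorphisms, equivalently, both its underlying left and right partial actions are (everywhere defined) actions.
   Context: A restriction semigroup is an algebra $(S,\cdot,{}^*,{}^+)$ where $(S,\cdot)$ is a semigroup and the identities $xx^*=x$, $x^*y^*=y^*x^*$, $(xy^* )^*=x^*y^*$, $x^*y=y(xy)^*$, $x^+x=x$, $x^+y^+=y^+x^+$, $(x^+y)^+=x^+y^+$, $xy^+=(xy)^+x$, $(x^+)^*=x^+$, $(x^* )^+=x^*$ hold. $P(S)=\{x^*\colon x\in S\}$ is the semilattice of projections; $\sigma$ is the least congruence identifying all projections; $S$ is proper if ($a^*=b^*$, $a\,\sigma\, b$) $\Rightarrow a=b$ and ($a^+=b^+$, $a\,\sigma\, b$) $\Rightarrow a=b$. For a proper restriction semigroup $S$, the underlying left partial action of $T=S/\sigma$ on $E=P(S)$ is: $t\cdot e$ is defined iff there is $a\in t$ with $a^*\ge e$, and then $t\cdot e=(ae)^+$. The underlying right partial action $\circ$ is its reverse: $e\circ t$ is defined iff $e=t\cdot f$ for some $f$ and then $e\circ t=f$. $W$-product: if a monoid $T$ acts on the left on a semilattice $Y$ (written $t*y$) by order-embeddings such that each range $t*Y$ is an order ideal of $Y$, then $W(T,Y)=\{(t*y,t)\colon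 y\in Y,t\in T\}$ with $(t*y,t)(s*x,s)=(t*y\wedge(ts)*x,ts)$, $(t*y,t)^*=(y,1)$, $(t*y,t)^+=(t*y,1)$. If the action is by order-automorphisms, $W(T,Y)$ is called the semidirect product $T\ltimes Y$ (as a set it is $Y\times T$). *)

(* Defs.v *)
Set Implicit Arguments.

Definition is_restriction_semigroup (S : Type)
  (mul : S -> S -> S) (star plus : S -> S) : Prop :=
  (forall x y z, mul x (mul y z) = mul (mul x y) z) /\
  (forall x, mul x (star x) = x) /\
  (forall x y, mul (star x) (star y) = mul (star y) (star x)) /\
  (forall x y, star (mul x (star y)) = mul (star x) (star y)) /\
  (forall x y, mul (star x) y = mul y (star (mul x y))) /\
  (forall x, mul (plus x) x = x) /\
  (forall x y, mul (plus x) (plus y) = mul (plus y) (plus x)) /\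
  (forall x y, plus (mul (plus x) y) = mul (plus x) (plus y)) /\
  (forall x y, mul x (plus y) = mul (plus (mul x y)) x) /\
  (forall x, star (plus x) = plus x) /\
  (forall x, plus (star x) = star x).

Section Restriction.
Variables (S : Type) (mul : S -> S -> S) (star plus : S -> S).

Definition projection (e : S) : Prop := exists x, e = star x.

Definition proj_le (e f : S) : Prop := e = mul e f.

Definition rs_congruence (R : S -> S -> Prop) : Prop :=
  (forall a, R a a) /\ (forall a b, R a b -> R b a) /\
  (forall a b c, R a b -> R b c -> R a c) /\
  (forall a b c d, R a b -> R c d -> R (mul a c) (mul b d)) /\
  (forall a b, R a b -> R (star a) (star b)) /\
  (forall a b, R a b -> R (plus a) (plus b)).

Definition sigma (a b : S) : Prop :=
  forall R, rs_congruence R ->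
    (forall e f, projection e -> projection f -> R e f) -> R a b.

Definition proper : Prop :=
  (forall a b, star a = star b -> sigma a b -> a = b) /\
  (forall a b, plus a = plus b -> sigma a b -> a = b).

(* Underlying left partial action of T = S/sigma on E = P(S); the
   sigma-class t is represented by any s in t.
   lpa_defined s e : t . e is defined  (t = [s]_sigma)
   lpa s e f       : t . e is defined and equals f. *)
Definition lpa_defined (s e : S) : Prop :=
  exists a, sigma a s /\ proj_le e (star a).

Definition lpa (s e f : S) : Prop :=
  exists a, sigma a s /\ proj_le e (star a) /\ f = plus (mul a e).

Definition left_action_total : Prop :=
  forall s e, projection e -> lpa_defined s e.

(* the underlying right partial action (reverse of the left one):
   e o t defined iff e = t . f for some f in E; it is an action iff
   it is defined everywhere *)
Definition right_action_total : Prop :=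
  forall s e, projection e -> exists f, projection f /\ lpa s f e.

(* the left partial action is an action by order-automorphisms of E:
   everywhere defined, each map e |-> t . e is onto E and preserves and
   reflects the order (hence is single-valued and injective). *)
Definition left_action_by_automorphisms : Prop :=
  left_action_total /\
  (forall s f, projection f -> exists e, projection e /\ lpa s e f) /\
  (forall s e e' f f', projection e -> projection e' ->
      lpa s e f -> lpa s e' f' -> (proj_le e e' <-> proj_le f f')).

End Restriction.

Definition is_monoid (T : Type) (op : T -> T -> T) (one : T) : Prop :=
  (forall x y z, op x (op y z) = op (op x y) z) /\
  (forall x, op one x = x) /\ (forall x, op x one = x).

Definition is_semilattice (Y : Type) (meet : Y -> Y -> Y) : Prop :=
  (forall x y z, meet x (meet y z) = meet (meet x y) z) /\
  (forall x y, meet x y = meet y x) /\ (forall x, meet x x = x).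

Definition sl_le (Y : Type) (meet : Y -> Y -> Y) (x y : Y) : Prop :=
  meet x y = x.

Definition is_monoid_action (T Y : Type) (op : T -> T -> T) (one : T)
  (act : T -> Y -> Y) : Prop :=
  (forall y, act one y = y) /\
  (forall t s y, act (op t s) y = act t (act s y)).

Definition W_action (T Y : Type) (op : T -> T -> T) (one : T)
  (meet : Y -> Y -> Y) (act : T -> Y -> Y) : Prop :=
  is_monoid_action op one act /\
  (forall t y z, sl_le meet (act t y) (act t z) <-> sl_le meet y z) /\
  (forall t y z, sl_le meet z (act t y) -> exists x, z = act t x).

Definition automorphism_action (T Y : Type) (op : T -> T -> T) (one : T)
  (meet : Y -> Y -> Y) (act : T -> Y -> Y) : Prop :=
  is_monoid_action op one act /\
  (forall t y z, sl_le meet (act t y) (act t z) <-> sl_le meet y z) /\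
  (forall t z, exists y, act t y = z).

Definition in_W (T Y : Type) (act : T -> Y -> Y) (p : Y * T) : Prop :=
  exists y t, p = (act t y, t).

Definition iso_onto_W (S : Type) (mul : S -> S -> S) (star plus : S -> S)
  (T Y : Type) (op : T -> T -> T) (one : T) (meet : Y -> Y -> Y)
  (act : T -> Y -> Y) (f : S -> Y * T) : Prop :=
  (forall a b, f a = f b -> a = b) /\
  (forall p, in_W act p <-> exists a, f a = p) /\
  (forall a b y t x s, f a = (act t y, t) -> f b = (act s x, s) ->
      f (mul a b) = (meet (act t y) (act (op t s) x), op t s)) /\
  (forall a y t, f a = (act t y, t) ->
      f (star a) = (y, one) /\ f (plus a) = (act t y, one)).

Definition isomorphic_to_W_product (S : Type) (mul : S -> S -> S)
  (star plus : S -> S) : Prop :=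
  exists (T : Type) (op : T -> T -> T) (one : T)
         (Y : Type) (meet : Y -> Y -> Y) (act : T -> Y -> Y) (f : S -> Y * T),
    is_monoid op one /\ is_semilattice meet /\ W_action op one meet act /\
    iso_onto_W mul star plus op one meet act f.

(* semidirect product T |x Y = W(T,Y) for an action by order-automorphisms *)
Definition isomorphic_to_semidirect_product (S : Type) (mul : S -> S -> S)
  (star plus : S -> S) : Prop :=
  exists (T : Type) (op : T -> T -> T) (one : T)
         (Y : Type) (meet : Y -> Y -> Y) (act : T -> Y -> Y) (f : S -> Y * T),
    is_monoid op one /\ is_semilattice meet /\
    automorphism_action op one meet act /\
    iso_onto_W mul star plus op one meet act f.

(* Main.v *)
Require Import Defs.
From Stdlib Require Import Classical ClassicalEpsilon FunctionalExtensionality PropExtensionality ProofIrrelevance.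
Set Implicit Arguments.

Section RS.
Variables (S : Type) (mul : S -> S -> S) (star plus : S -> S).
Hypothesis HS : is_restriction_semigroup mul star plus.

Notation sg := (sigma mul star plus).
Definition isproj (e : S) := star e = e.

Lemma assoc x y z : mul x (mul y z) = mul (mul x y) z.
Proof. apply HS. Qed.
Lemma mst x : mul x (star x) = x.
Proof. apply HS. Qed.
Lemma stc x y : mul (star x) (star y) = mul (star y) (star x).
Proof. apply HS. Qed.
Lemma st_ms x y : star (mul x (star y)) = mul (star x) (star y).
Proof. apply HS. Qed.
Lemma st_l x y : mul (star x) y = mul y (star (mul x y)).
Proof. apply HS. Qed.
Lemma mpl x : mul (plus x) x = x.
Proof. apply HS. Qed.
Lemma plc x y : mul (plus x) (plus y) = mul (plus y) (plus x).
Proof. apply HS. Qed.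
Lemma pl_mp x y : plus (mul (plus x) y) = mul (plus x) (plus y).
Proof. apply HS. Qed.
Lemma pl_r x y : mul x (plus y) = mul (plus (mul x y)) x.
Proof. apply HS. Qed.
Lemma st_pl x : star (plus x) = plus x.
Proof. apply HS. Qed.
Lemma pl_st x : plus (star x) = star x.
Proof. apply HS. Qed.

Lemma star_star x : star (star x) = star x.
Proof. rewrite <- (pl_st x) at 1. rewrite st_pl. apply pl_st. Qed.
Lemma isproj_star x : isproj (star x).
Proof. apply star_star. Qed.
Lemma isproj_plus x : isproj (plus x).
Proof. apply st_pl. Qed.
Lemma plus_proj e : isproj e -> plus e = e.
Proof. unfold isproj; intro H. rewrite <- H. apply pl_st. Qed.
Lemma projection_iff e : projection star e <-> isproj e.
Proof. split. intros [x ->]. apply isproj_star. intro H. exists e. now rewrite H. Qed.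
Lemma proj_idem e : isproj e -> mul e e = e.
Proof. unfold isproj; intro H. rewrite <- H at 2. apply mst. Qed.
Lemma proj_comm e f : isproj e -> isproj f -> mul e f = mul f e.
Proof. unfold isproj; intros He Hf. rewrite <- He, <- Hf. apply stc. Qed.
Lemma star_mul_proj a y : isproj y -> star (mul a y) = mul (star a) y.
Proof. unfold isproj; intro H. rewrite <- H at 1 2. rewrite st_ms. now rewrite H. Qed.
Lemma plus_proj_mul y a : isproj y -> plus (mul y a) = mul y (plus a).
Proof. intro H. rewrite <- (plus_proj H) at 1 2. apply pl_mp. Qed.
Lemma star_mul_le x y : star (mul x y) = mul (star (mul x y)) (star y).
Proof. rewrite <- st_ms. now rewrite <- assoc, mst. Qed.
Lemma plus_mul_le x y : plus (mul x y) = mul (plus x) (plus (mul x y)).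
Proof. rewrite <- pl_mp. now rewrite assoc, mpl. Qed.
Lemma proj_mul e f : isproj e -> isproj f -> isproj (mul e f).
Proof. intros He Hf. unfold isproj. rewrite star_mul_proj by exact Hf. now rewrite He. Qed.
Lemma plus_mul_plus x y : plus (mul x (plus y)) = plus (mul x y).
Proof. rewrite pl_r, pl_mp, plc. symmetry. apply plus_mul_le. Qed.
Lemma star_star_mul x y : star (mul (star x) y) = star (mul x y).
Proof. rewrite st_l, st_ms, stc. symmetry. apply star_mul_le. Qed.

Lemma sigma_cong : rs_congruence mul star plus sg.
Proof.
  unfold rs_congruence, sigma; split; [|split; [|split; [|split; [|split]]]].
  - intros a R HR _. apply (proj1 HR).
  - intros a b H R HR Hp. destruct HR as (r & sy & tr & m & st & pl). apply sy. now apply H.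
  - intros a b c H1 H2 R HR Hp. destruct HR as (r & sy & tr & m & st & pl). apply (tr a b c). now apply H1. now apply H2.
  - intros a b c d H1 H2 R HR Hp. destruct HR as (r & sy & tr & m & st & pl). apply m. now apply H1. now apply H2.
  - intros a b H R HR Hp. destruct HR as (r & sy & tr & m & st & pl). apply st. now apply H.
  - intros a b H R HR Hp. destruct HR as (r & sy & tr & m & st & pl). apply pl. now apply H.
Qed.
Lemma sg_refl a : sg a a. Proof. apply (proj1 sigma_cong). Qed.
Lemma sg_sym a b : sg a b -> sg b a. Proof. apply (proj1 (proj2 sigma_cong)). Qed.
Lemma sg_trans a b c : sg a b -> sg b c -> sg a c. Proof. apply (proj1 (proj2 (proj2 sigma_cong))). Qed.
Lemma sg_mul a b c d : sg a b -> sg c d -> sg (mul a c) (mul b d). Proof. apply (proj1 (proj2 (proj2 (proj2 sigma_cong)))). Qed.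
Lemma sg_proj e f : isproj e -> isproj f -> sg e f.
Proof. intros He Hf R HR Hp. apply Hp; apply projection_iff; assumption. Qed.
Lemma sg_mul_proj_r a y : isproj y -> sg (mul a y) a.
Proof. intro H. rewrite <- (mst a) at 2. apply sg_mul. apply sg_refl. apply sg_proj. exact H. apply isproj_star. Qed.
Lemma sg_mul_proj_l e a : isproj e -> sg (mul e a) a.
Proof. intro H. rewrite <- (mpl a) at 2. apply sg_mul. apply sg_proj. exact H. apply isproj_plus. apply sg_refl. Qed.


Section Back.
Hypothesis Hpr : proper mul star plus.
Hypothesis Htot : left_action_total mul star plus.
Variable s0 : S.

Lemma proper_star a b : star a = star b -> sg a b -> a = b.
Proof. apply (proj1 Hpr). Qed.
Lemma proper_plus a b : plus a = plus b -> sg a b -> a = b.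
Proof. apply (proj2 Hpr). Qed.

Definition T := {P : S -> Prop | exists c, forall a, P a <-> sg a c}.
Definition cls (c : S) : T := exist _ (fun a => sg a c) (ex_intro _ c (fun a => iff_refl _)).

Lemma cls_eq a b : sg a b -> cls a = cls b.
Proof.
  intro H. unfold cls. apply subset_eq_compat. apply functional_extensionality. intro x.
  apply propositional_extensionality. split; intro K.
  - exact (sg_trans K H).
  - exact (sg_trans K (sg_sym H)).
Qed.
Lemma cls_inj a b : cls a = cls b -> sg a b.
Proof.
  intro H. apply (f_equal (fun t : T => proj1_sig t a)) in H. simpl in H.
  assert (K : sg a a) by apply sg_refl. rewrite H in K. exact K.
Qed.
Lemma cls_surj (t : T) : exists c, t = cls c.
Proof.
  destruct t as [P [c Hc]]. exists c. unfold cls. apply subset_eq_compat.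
  apply functional_extensionality. intro x. apply propositional_extensionality. apply Hc.
Qed.

Definition rep (t : T) : S := proj1_sig (constructive_indefinite_description _ (cls_surj t)).
Lemma rep_spec t : t = cls (rep t).
Proof. unfold rep. destruct (constructive_indefinite_description _ _). exact e. Qed.

Definition op (t u : T) : T := cls (mul (rep t) (rep u)).
Definition e0 := star s0.
Definition one : T := cls e0.

Lemma op_cls a b : op (cls a) (cls b) = cls (mul a b).
Proof.
  unfold op. apply cls_eq. apply sg_mul; apply cls_inj; symmetry; apply rep_spec.
Qed.

Lemma T_monoid : is_monoid op one.
Proof.
  split; [|split].
  - intros x y z. destruct (cls_surj x) as [a ->]. destruct (cls_surj y) as [b ->].
    destruct (cls_surj z) as [c ->]. rewrite !op_cls. now rewrite assoc.
  - intros x. destruct (cls_surj x) as [a ->]. unfold one. rewrite op_cls.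
    apply cls_eq. apply sg_mul_proj_l. apply isproj_star.
  - intros x. destruct (cls_surj x) as [a ->]. unfold one. rewrite op_cls.
    apply cls_eq. apply sg_mul_proj_r. apply isproj_star.
Qed.

Definition Y := {e : S | star e = e}.
Lemma Yeq (y z : Y) : proj1_sig y = proj1_sig z -> y = z.
Proof. destruct y, z. simpl. intros ->. apply subset_eq_compat. reflexivity. Qed.

Definition meet (y z : Y) : Y :=
  exist _ (mul (proj1_sig y) (proj1_sig z)) (proj_mul (proj2_sig y) (proj2_sig z)).

Lemma Y_semilattice : is_semilattice meet.
Proof.
  split; [|split].
  - intros x y z. apply Yeq. simpl. apply assoc.
  - intros x y. apply Yeq. simpl. apply proj_comm. apply (proj2_sig x). apply (proj2_sig y).
  - intros x. apply Yeq. simpl. apply proj_idem. apply (proj2_sig x).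
Qed.

Lemma act_ex (t : T) (y : Y) : exists u, cls u = t /\ star u = proj1_sig y.
Proof.
  destruct (cls_surj t) as [c ->]. destruct y as [y Hy]. simpl.
  destruct (Htot c (e:=y)) as [a [Ha Hle]].
  { apply projection_iff. exact Hy. }
  exists (mul a y). split.
  - apply cls_eq. eapply sg_trans. apply sg_mul_proj_r. exact Hy. exact Ha.
  - rewrite star_mul_proj by exact Hy. rewrite proj_comm. unfold proj_le in Hle. now rewrite <- Hle.
    apply isproj_star. exact Hy.
Qed.

Lemma act_unique u v : cls u = cls v -> star u = star v -> u = v.
Proof. intros H1 H2. apply proper_star. exact H2. apply cls_inj. exact H1. Qed.

Definition act (t : T) (y : Y) : Y :=
  exist _ (plus (proj1_sig (constructive_indefinite_description _ (act_ex t y)))) (st_pl _).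

Lemma act_spec t y u : cls u = t -> star u = proj1_sig y -> proj1_sig (act t y) = plus u.
Proof.
  intros H1 H2. unfold act. simpl. destruct (constructive_indefinite_description _ _) as [v [Hv1 Hv2]].
  simpl. f_equal. apply act_unique. congruence. congruence.
Qed.


Arguments act_spec {t y u} _ _.
Arguments act : simpl never.

Definition Ystar (a : S) : Y := exist _ (star a) (star_star a).
Definition fW (a : S) : Y * T := (exist _ (plus a) (st_pl a), cls a).

Lemma act_one y : act one y = y.
Proof.
  apply Yeq. rewrite (act_spec (u := proj1_sig y)).
  - apply plus_proj. apply (proj2_sig y).
  - apply cls_eq. apply sg_proj. apply (proj2_sig y). apply isproj_star.
  - apply (proj2_sig y).
Qed.

Lemma act_op t s y : act (op t s) y = act t (act s y).
Proof.
  destruct (act_ex s y) as [u [Hu1 Hu2]].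
  destruct (act_ex t (act s y)) as [v [Hv1 Hv2]].
  pose proof (act_spec Hu1 Hu2) as Eu.
  apply Yeq. rewrite (act_spec Hv1 Hv2).
  rewrite (act_spec (u := mul v u)).
  - rewrite <- plus_mul_plus. rewrite <- Eu, <- Hv2. now rewrite mst.
  - subst t s. now rewrite op_cls.
  - rewrite <- star_star_mul. rewrite Hv2, Eu, mpl. exact Hu2.
Qed.

Lemma act_le t y z : meet (act t y) (act t z) = act t y <-> meet y z = y.
Proof.
  destruct (act_ex t y) as [u [Hu1 Hu2]].
  destruct (act_ex t z) as [w [Hw1 Hw2]].
  pose proof (act_spec Hu1 Hu2) as Eu. pose proof (act_spec Hw1 Hw2) as Ew.
  destruct y as [y Hy]; destruct z as [z Hz]. simpl in *.
  split; intro H.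
  - apply (f_equal (@proj1_sig _ _)) in H. simpl in H. rewrite Eu, Ew in H.
    apply Yeq. simpl.
    assert (E : mul (plus u) w = u).
    { apply proper_plus.
      - rewrite plus_proj_mul by apply isproj_plus. exact H.
      - eapply sg_trans. apply sg_mul_proj_l. apply isproj_plus. apply cls_inj. congruence. }
    rewrite <- Hu2, <- Hw2. rewrite <- E at 1 2. symmetry. apply star_mul_le.
  - apply (f_equal (@proj1_sig _ _)) in H. simpl in H.
    apply Yeq. simpl. rewrite Eu, Ew.
    assert (E : mul w y = u).
    { apply act_unique.
      - rewrite Hu1. rewrite <- Hw1. apply cls_eq. apply sg_mul_proj_r. exact Hy.
      - rewrite star_mul_proj by exact Hy. rewrite Hw2, Hu2. rewrite proj_comm by assumption. exact H. }
    rewrite <- E. rewrite plc. symmetry. apply plus_mul_le.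
Qed.

Lemma act_inj t y z : act t y = act t z -> y = z.
Proof.
  intro H. destruct Y_semilattice as (_ & Hc & Hi).
  assert (H1 : meet y z = y). { apply (act_le t). rewrite H. apply Hi. }
  assert (H2 : meet z y = z). { apply (act_le t). rewrite H. apply Hi. }
  rewrite <- H1. rewrite Hc. exact H2.
Qed.

Lemma act_ideal t y z : meet z (act t y) = z -> exists x, z = act t x.
Proof.
  intro H. destruct (act_ex t y) as [u [Hu1 Hu2]].
  pose proof (act_spec Hu1 Hu2) as Eu.
  destruct z as [z Hz].
  apply (f_equal (@proj1_sig _ _)) in H. change (mul z (proj1_sig (act t y)) = z) in H. rewrite Eu in H.
  exists (Ystar (mul z u)). apply Yeq. change (z = proj1_sig (act t (Ystar (mul z u)))).
  rewrite (act_spec (u := mul z u)).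
  - rewrite plus_proj_mul by exact Hz. symmetry. exact H.
  - rewrite <- Hu1. apply cls_eq. apply sg_mul_proj_l. exact Hz.
  - reflexivity.
Qed.

Lemma W_act : W_action op one meet act.
Proof.
  split; [split|split].
  - apply act_one.
  - apply act_op.
  - intros t y z. unfold sl_le. apply act_le.
  - intros t y z. unfold sl_le. apply act_ideal.
Qed.

Lemma fW_eq a p t : fW a = (p, t) <-> plus a = proj1_sig p /\ cls a = t.
Proof.
  split.
  - intro H. split.
    + apply (f_equal (fun q => proj1_sig (fst q))) in H. exact H.
    + apply (f_equal snd) in H. exact H.
  - intros [H1 H2]. unfold fW. f_equal. apply Yeq. exact H1. exact H2.
Qed.

Lemma fW_form a t y : fW a = (act t y, t) -> t = cls a /\ y = Ystar a.
Proof.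
  intro H. apply fW_eq in H. destruct H as [H1 H2]. subst t. split. reflexivity.
  apply (act_inj (t := cls a)). apply Yeq. rewrite <- H1.
  rewrite (act_spec (u := a)); reflexivity.
Qed.

Lemma plus_mul_act a b : plus (mul a b) = mul (plus a) (proj1_sig (act (cls (mul a b)) (Ystar b))).
Proof.
  destruct (Htot a (e := plus b)) as [a' [Ha' Hle]].
  { apply projection_iff. apply isproj_plus. }
  unfold proj_le in Hle.
  assert (Hb : mul (star a') b = b).
  { rewrite <- (mpl b) at 1 2. rewrite assoc. f_equal.
    rewrite proj_comm by (apply isproj_star || apply isproj_plus). now symmetry. }
  rewrite (act_spec (u := mul a' b)).
  2: { apply cls_eq. apply sg_mul. exact Ha'. apply sg_refl. }
  2: { simpl. rewrite <- star_star_mul. now rewrite Hb. }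
  assert (E1 : mul (plus a) a' = mul (plus a') a).
  { apply proper_plus.
    - rewrite !plus_proj_mul by apply isproj_plus. apply plc.
    - eapply sg_trans. apply sg_mul_proj_l. apply isproj_plus.
      eapply sg_trans. exact Ha'. apply sg_sym. apply sg_mul_proj_l. apply isproj_plus. }
  assert (E2 : mul a' (star a) = mul a (star a')).
  { apply proper_star.
    - rewrite !st_ms. apply stc.
    - eapply sg_trans. apply sg_mul_proj_r. apply isproj_star.
      eapply sg_trans. exact Ha'. apply sg_sym. apply sg_mul_proj_r. apply isproj_star. }
  rewrite <- (plus_proj_mul (y := plus a) (mul a' b) (isproj_plus a)). rewrite assoc, E1, <- assoc.
  rewrite (plus_proj_mul (y := plus a')) by apply isproj_plus.
  assert (E3 : mul a b = mul (plus a') (mul a b)).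
  { rewrite <- Hb at 1. rewrite assoc, <- E2. rewrite <- (mpl a') at 1. rewrite <- !assoc. f_equal.
    rewrite assoc, E2, <- assoc, Hb. reflexivity. }
  rewrite E3 at 1. apply plus_proj_mul. apply isproj_plus.
Qed.

Lemma fW_iso : iso_onto_W mul star plus op one meet act fW.
Proof.
  split; [|split; [|split]].
  - intros a b H. destruct (proj1 (fW_eq b (fst (fW a)) (snd (fW a)))) as [H1 H2].
    { rewrite H. destruct (fW b). reflexivity. }
    apply proper_plus. symmetry. exact H1. apply cls_inj. symmetry. exact H2.
  - intros p. split.
    + intros (y & t & ->). destruct (act_ex t y) as [u [Hu1 Hu2]]. exists u.
      apply (proj2 (fW_eq _ _ _)). split. rewrite (act_spec (u := u)); [reflexivity|assumption..]. exact Hu1.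
    + intros [a <-]. exists (Ystar a), (cls a). apply (proj2 (fW_eq _ _ _)). split.
      rewrite (act_spec (u := a)); reflexivity. reflexivity.
  - intros a b y t x s Ha Hb. apply fW_form in Ha. apply fW_form in Hb.
    destruct Ha as [-> ->]. destruct Hb as [-> ->]. rewrite op_cls.
    apply (proj2 (fW_eq _ _ _)). split. 2: reflexivity. change (plus (mul a b) = mul (proj1_sig (act (cls a) (Ystar a))) (proj1_sig (act (cls (mul a b)) (Ystar b)))).
    rewrite (act_spec (u := a)) by reflexivity.
    apply plus_mul_act.
  - intros a y t Ha. pose proof Ha as Ha'. apply fW_form in Ha. destruct Ha as [-> ->].
    split; apply (proj2 (fW_eq _ _ _)); split.
    + apply pl_st.
    + apply cls_eq. apply sg_proj; apply isproj_star.
    + apply (proj1 (fW_eq _ _ _)) in Ha'. destruct Ha' as [H1 _]. rewrite <- H1. apply plus_proj. apply isproj_plus.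
    + apply cls_eq. apply sg_proj. apply isproj_plus. apply isproj_star.
Qed.

Lemma back_W : isomorphic_to_W_product mul star plus.
Proof.
  exists T, op, one, Y, meet, act, fW. split. apply T_monoid. split. apply Y_semilattice.
  split. apply W_act. apply fW_iso.
Qed.

Lemma back_SD : right_action_total mul star plus -> isomorphic_to_semidirect_product mul star plus.
Proof.
  intro Hrt.
  exists T, op, one, Y, meet, act, fW. split. apply T_monoid. split. apply Y_semilattice.
  split. 2: apply fW_iso.
  split. apply (proj1 W_act). split. intros t y z. unfold sl_le. apply act_le.
  intros t [z Hz]. destruct (cls_surj t) as [c ->].
  destruct (Hrt c z) as [f [Hf [a (Ha & Hle & Hz')]]]. { apply projection_iff. exact Hz. }
  apply projection_iff in Hf. unfold proj_le in Hle.
  exists (exist _ f Hf). apply Yeq. change (proj1_sig (act (cls c) (exist _ f Hf)) = z). rewrite (act_spec (u := mul a f)).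
  - now symmetry.
  - apply cls_eq. eapply sg_trans. apply sg_mul_proj_r. exact Hf. exact Ha.
  - simpl. rewrite star_mul_proj by exact Hf. rewrite proj_comm by (apply isproj_star || exact Hf). now symmetry.
Qed.

End Back.

Section Fwd.
Variables (TT : Type) (opT : TT -> TT -> TT) (oneT : TT) (YY : Type) (meetY : YY -> YY -> YY)
  (actY : TT -> YY -> YY) (ff : S -> YY * TT).
Hypothesis Hmon : is_monoid opT oneT.
Hypothesis Hsl : is_semilattice meetY.
Hypothesis HW : W_action opT oneT meetY actY.
Hypothesis Hiso : iso_onto_W mul star plus opT oneT meetY actY ff.

Lemma ff_inj a b : ff a = ff b -> a = b.
Proof. apply (proj1 Hiso). Qed.
Lemma ff_rep a : exists y t, ff a = (actY t y, t).
Proof. apply (proj1 (proj2 Hiso)). exists a. reflexivity. Qed.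
Lemma ff_img p : in_W actY p -> exists a, ff a = p.
Proof. apply (proj1 (proj2 Hiso)). Qed.
Lemma ff_mul a b y t x s : ff a = (actY t y, t) -> ff b = (actY s x, s) ->
  ff (mul a b) = (meetY (actY t y) (actY (opT t s) x), opT t s).
Proof. apply (proj1 (proj2 (proj2 Hiso))). Qed.
Lemma ff_star a y t : ff a = (actY t y, t) -> ff (star a) = (y, oneT).
Proof. intro H. apply (proj2 (proj2 (proj2 Hiso)) a y t H). Qed.
Lemma ff_plus a y t : ff a = (actY t y, t) -> ff (plus a) = (actY t y, oneT).
Proof. intro H. apply (proj2 (proj2 (proj2 Hiso)) a y t H). Qed.
Lemma actY_one y : actY oneT y = y.
Proof. apply (proj1 (proj1 HW)). Qed.
Lemma op1l t : opT oneT t = t. Proof. apply (proj1 (proj2 Hmon)). Qed.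
Lemma op1r t : opT t oneT = t. Proof. apply (proj2 (proj2 Hmon)). Qed.
Lemma meet_comm x y : meetY x y = meetY y x. Proof. apply (proj1 (proj2 Hsl)). Qed.
Lemma meet_idem x : meetY x x = x. Proof. apply (proj2 (proj2 Hsl)). Qed.

Lemma ff_one a z : ff a = (z, oneT) -> ff a = (actY oneT z, oneT).
Proof. intro H. now rewrite actY_one. Qed.

Lemma snd_mul a b : snd (ff (mul a b)) = opT (snd (ff a)) (snd (ff b)).
Proof.
  destruct (ff_rep a) as (y & t & Ha). destruct (ff_rep b) as (x & s & Hb).
  rewrite (ff_mul Ha Hb), Ha, Hb. reflexivity.
Qed.
Lemma snd_star a : snd (ff (star a)) = oneT.
Proof. destruct (ff_rep a) as (y & t & Ha). now rewrite (ff_star Ha). Qed.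
Lemma snd_plus a : snd (ff (plus a)) = oneT.
Proof. destruct (ff_rep a) as (y & t & Ha). now rewrite (ff_plus Ha). Qed.

Lemma sg_snd a b : sg a b -> snd (ff a) = snd (ff b).
Proof.
  intro H. apply (H (fun a b => snd (ff a) = snd (ff b))).
  - split; [|split; [|split; [|split; [|split]]]].
    + reflexivity.
    + intros; congruence.
    + intros; congruence.
    + intros a' b' c d H1 H2. rewrite !snd_mul. congruence.
    + intros. now rewrite !snd_star.
    + intros. now rewrite !snd_plus.
  - intros e f [x ->] [x' ->]. now rewrite !snd_star.
Qed.

Lemma ff_proj e : projection star e -> exists z, ff e = (z, oneT).
Proof. intros [x ->]. destruct (ff_rep x) as (y & t & H). exists y. exact (ff_star H). Qed.

Lemma ff_mul_proj e e' z z' : ff e = (z, oneT) -> ff e' = (z', oneT) -> ff (mul e e') = (meetY z z', oneT).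
Proof.
  intros H H'. apply ff_one in H. apply ff_one in H'. rewrite (ff_mul H H'). now rewrite op1l, !actY_one.
Qed.

Lemma snd_sg a b : snd (ff a) = snd (ff b) -> sg a b.
Proof.
  intros Hs R HR Hp. destruct HR as (r & sy & tr & m & st & pl).
  assert (Ka : R a (mul a (star b))).
  { rewrite <- (mst a) at 1. apply m. apply r. apply Hp; eexists; reflexivity. }
  assert (Kb : R b (mul b (star a))).
  { rewrite <- (mst b) at 1. apply m. apply r. apply Hp; eexists; reflexivity. }
  assert (E : mul a (star b) = mul b (star a)).
  { destruct (ff_rep a) as (y & t & Ha). destruct (ff_rep b) as (x & t' & Hb).
    rewrite Ha, Hb in Hs. simpl in Hs. subst t'.
    pose proof (ff_one (ff_star Ha)) as Sa. pose proof (ff_one (ff_star Hb)) as Sb.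
    apply ff_inj. rewrite (ff_mul Ha Sb), (ff_mul Hb Sa). rewrite !op1r. f_equal. apply meet_comm. }
  apply (tr a (mul a (star b)) b). exact Ka. rewrite E. apply sy. exact Kb.
Qed.

Lemma fwd_proper : proper mul star plus.
Proof.
  split.
  - intros a b Hst Hsg. apply ff_inj. pose proof (sg_snd Hsg) as Hs.
    destruct (ff_rep a) as (y & t & Ha). destruct (ff_rep b) as (x & t' & Hb).
    pose proof (ff_star Ha) as Sa. pose proof (ff_star Hb) as Sb. rewrite Hst in Sa.
    rewrite Sa in Sb. injection Sb as ->. rewrite Ha, Hb in *. simpl in Hs. now subst.
  - intros a b Hst Hsg. apply ff_inj. pose proof (sg_snd Hsg) as Hs.
    destruct (ff_rep a) as (y & t & Ha). destruct (ff_rep b) as (x & t' & Hb).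
    pose proof (ff_plus Ha) as Sa. pose proof (ff_plus Hb) as Sb. rewrite Hst in Sa.
    rewrite Sa in Sb. injection Sb as E. rewrite Ha, Hb in *. simpl in Hs. subst. now rewrite E.
Qed.

Lemma fwd_total : left_action_total mul star plus.
Proof.
  intros s e He. destruct (ff_proj He) as [z Hz].
  destruct (ff_rep s) as (w & t & Hs).
  destruct (ff_img (p := (actY t z, t))) as [a Ha]. { exists z, t. reflexivity. }
  exists a. split.
  - apply snd_sg. now rewrite Ha, Hs.
  - unfold proj_le. apply ff_inj. rewrite (ff_mul_proj Hz (ff_star Ha)). rewrite meet_idem. exact Hz.
Qed.

Hypothesis Hsurj : forall t z, exists y, actY t y = z.

Lemma fwd_right : forall s e, projection star e -> exists f, projection star f /\ lpa mul star plus s f e.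
Proof.
  intros s e He. destruct (ff_proj He) as [z Hz].
  destruct (ff_rep s) as (w & t & Hs). destruct (Hsurj t z) as [y Hy].
  destruct (ff_img (p := (actY t y, t))) as [a Ha]. { exists y, t. reflexivity. }
  exists (star a). split. eexists; reflexivity.
  exists a. split; [|split].
  - apply snd_sg. now rewrite Ha, Hs.
  - unfold proj_le. symmetry. apply proj_idem. apply isproj_star.
  - rewrite mst. apply ff_inj. rewrite (ff_plus Ha). now rewrite Hy.
Qed.

Lemma lpa_ff s t w e ze fv : ff s = (actY t w, t) -> ff e = (ze, oneT) ->
  lpa mul star plus s e fv -> ff fv = (actY t ze, oneT).
Proof.
  intros Hs He (a & Ha & Hle & ->).
  destruct (ff_rep a) as (ya & ta & HA).
  assert (ta = t). { pose proof (sg_snd Ha) as K. rewrite HA, Hs in K. exact K. } subst ta.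
  pose proof (ff_star HA) as Sa.
  assert (Hz : meetY ze ya = ze).
  { unfold proj_le in Hle. pose proof (ff_mul_proj He Sa) as K. rewrite <- Hle, He in K.
    injection K as K. symmetry. exact K. }
  assert (Hm : ff (mul a e) = (actY t ze, t)).
  { rewrite (ff_mul HA (ff_one He)). rewrite op1r. f_equal. rewrite meet_comm.
    apply (proj2 (proj1 (proj2 HW) t ze ya)). exact Hz. }
  exact (ff_plus Hm).
Qed.

Lemma proj_le_ff e e' z z' : ff e = (z, oneT) -> ff e' = (z', oneT) ->
  (proj_le mul e e' <-> meetY z z' = z).
Proof.
  intros H H'. unfold proj_le. split.
  - intro E. pose proof (ff_mul_proj H H') as K. rewrite <- E, H in K. injection K as K. now symmetry.
  - intro E. apply ff_inj. rewrite (ff_mul_proj H H'), H. now rewrite E.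
Qed.

Lemma fwd_auto : left_action_by_automorphisms mul star plus.
Proof.
  split; [exact fwd_total|split; [exact fwd_right|]].
  intros s e e' fv fv' He He' L L'.
  destruct (ff_proj He) as [z Hz]. destruct (ff_proj He') as [z' Hz'].
  destruct (ff_rep s) as (w & t & Hs).
  pose proof (lpa_ff Hs Hz L) as F. pose proof (lpa_ff Hs Hz' L') as F'.
  rewrite (proj_le_ff Hz Hz'), (proj_le_ff F F').
  symmetry. apply (proj1 (proj2 HW)).
Qed.

End Fwd.
End RS.

Lemma empty_case (S : Type) (mul : S -> S -> S) (star plus : S -> S) :
  ~ inhabited S ->
  isomorphic_to_semidirect_product mul star plus /\ isomorphic_to_W_product mul star plus.
Proof.
  intro HE.
  assert (F : forall a : S, False) by (intro a; apply HE; constructor; exact a).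
  set (meetE := fun (x y : Empty_set) => x).
  set (actE := fun (t : unit) (y : Empty_set) => y).
  set (fE := fun a : S => False_rect (Empty_set * unit) (F a)).
  assert (Hm : is_monoid (fun _ _ : unit => tt) tt).
  { split; [|split]; intros; try destruct x; reflexivity. }
  assert (Hs : is_semilattice meetE).
  { split; [|split]; intros x; destruct x. }
  assert (Hi : iso_onto_W mul star plus (fun _ _ : unit => tt) tt meetE actE fE).
  { split; [|split; [|split]].
    - intros a. destruct (F a).
    - intros [y t]. destruct y.
    - intros a. destruct (F a).
    - intros a. destruct (F a). }
  split.
  - exists unit, (fun _ _ => tt), tt, Empty_set, meetE, actE, fE.
    split. exact Hm. split. exact Hs. split. 2: exact Hi.
    split. split. intro y; destruct y. intros t s y; destruct y.
    split. intros t y; destruct y. intros t z; destruct z.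
  - exists unit, (fun _ _ => tt), tt, Empty_set, meetE, actE, fE.
    split. exact Hm. split. exact Hs. split. 2: exact Hi.
    split. split. intro y; destruct y. intros t s y; destruct y.
    split. intros t y; destruct y. intros t y; destruct y.
Qed.

Lemma SD_W (T Y : Type) (op : T -> T -> T) (one : T) (meet : Y -> Y -> Y) (act : T -> Y -> Y) :
  automorphism_action op one meet act -> W_action op one meet act.
Proof.
  intros (Ha & Ho & Hs). split. exact Ha. split. exact Ho.
  intros t y z _. destruct (Hs t z) as [x <-]. now exists x.
Qed.

Theorem proposition3p3 (S : Type) (mul : S -> S -> S) (star plus : S -> S)
  (HS : is_restriction_semigroup mul star plus) :
  (isomorphic_to_W_product mul star plus <->
     proper mul star plus /\ left_action_total mul star plus) /\
  (isomorphic_to_semidirect_product mul star plus <->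
     proper mul star plus /\ left_action_by_automorphisms mul star plus) /\
  (isomorphic_to_semidirect_product mul star plus <->
     proper mul star plus /\ left_action_total mul star plus /\
     right_action_total mul star plus).
Proof.
  assert (Back : proper mul star plus -> left_action_total mul star plus ->
    isomorphic_to_W_product mul star plus /\
    (right_action_total mul star plus -> isomorphic_to_semidirect_product mul star plus)).
  { intros Hp Ht. destruct (classic (inhabited S)) as [[s0]|HE].
    - split. exact (back_W HS Hp Ht s0). exact (back_SD HS Hp Ht s0).
    - split. apply (empty_case mul star plus HE). intros _. apply (empty_case mul star plus HE). }
  split; [|split].
  - split.
    + intros (T & op & one & Y & meet & act & f & Hm & Hs & HW & Hi).
      split. eapply fwd_proper; eassumption. eapply fwd_total; eassumption.
    + intros [Hp Ht]. apply (Back Hp Ht).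
  - split.
    + intros (T & op & one & Y & meet & act & f & Hm & Hs & HA & Hi).
      pose proof (SD_W HA) as HW.
      split. eapply fwd_proper; eassumption. eapply fwd_auto; try eassumption. apply HA.
    + intros [Hp (Ht & Hr & _)]. apply (Back Hp Ht). exact Hr.
  - split.
    + intros (T & op & one & Y & meet & act & f & Hm & Hs & HA & Hi).
      pose proof (SD_W HA) as HW.
      split. eapply fwd_proper; eassumption. split. eapply fwd_total; eassumption.
      intros s e He. eapply fwd_right; try eassumption. apply HA.
    + intros (Hp & Ht & Hr). apply (Back Hp Ht). exact Hr.
Qed.
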